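(* Let $\mathcal H$ and $\mathcal H_\varepsilon$ be separable Hilbert spaces, $\mathfrak a$ and $\mathfrak a_\varepsilon$ closed densely defined non-negative sesquilinear forms in $\mathcal H$ and $\mathcal H_\varepsilon$, and $\mathcal A$, $\mathcal A_\varepsilon$ the non-negative self-adjoint operators associated with them. Let $J_\varepsilon:\mathcal H\to\mathcal H_\varepsilon$ and $\check J_\varepsilon:\mathcal H_\varepsilon\to\mathcal H$ be bounded linear operators and $\delta_\varepsilon,\check\delta_\varepsilon,\nu_\varepsilon,\check\nu_\varepsilon\ge0$ constants such that $$\|(\mathcal A_\varepsilon+\mathrm I)^{-1}J_\varepsilon-J_\varepsilon(\mathcal A+\mathrm I)^{-1}\|_{\mathcal H\to\mathcal H_\varepsilon}\le\delta_\varepsilon,\qquad \|\check J_\varepsilon(\mathcal A_\varepsilon+\mathrm I)^{-1}-(\mathcal A+\mathrm I)^{-1}\check J_\varepsilon\|_{\mathcal H_\varepsilon\to\mathcal H}\le\check\delta_\varepsilon,$$ $$\|f\|^2_{\mathcal H}\le\|J_\varepsilon f\|^2_{\mathcal H_\varepsilon}+\nu_\varepsilon\mathfrak a[f,f]\ \ \forall f\in\mathrm{dom}(\mathfrak a),\qquad \|u\|^2_{\mathcal H_\varepsilon}\le\|\check J_\varepsilon u\|^2_{\mathcal H}+\check\nu_\varepsilon\mathfrak a_\varepsilon[u,u]\ \ \forall u\in\mathrm{dom}(\mathfrak a_\varepsilon).$$ Then for any $d\in(0,1)$ such that $\nu_\varepsilon,\check\nu_\varepsilon\in[0,\frac d{1-d})$,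 $$\mathrm{dist}_{\rm out}\Big(\sigma((\mathcal A_\varepsilon+\mathrm I)^{-1})\cap[d,1],\ \sigma((\mathcal A+\mathrm I)^{-1})\Big)\le\frac{\check\delta_\varepsilon}{\sqrt{1-\check\nu_\varepsilon(d^{-1}-1)}},$$ $$\mathrm{dist}_{\rm out}\Big(\sigma((\mathcal A+\mathrm I)^{-1})\cap[d,1],\ \sigma((\mathcal A_\varepsilon+\mathrm I)^{-1})\Big)\le\frac{\delta_\varepsilon}{\sqrt{1-\nu_\varepsilon(d^{-1}-1)}}.$$
   Context: The subscript $\varepsilon$ is merely a label (the spaces and operators need not depend on any parameter). For compact sets $X,Y\subset\mathbb R$, $\mathrm{dist}_{\rm out}(X,Y)=\sup_{x\in X}\inf_{y\in Y}|x-y|$ (with the supremum over the empty set taken as $0$). *)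

(* Defs.v *)
From HB Require Import structures.
From mathcomp Require Import all_boot all_order all_algebra.
From mathcomp Require Import boolp classical_sets reals constructive_ereal ereal.
From mathcomp Require Import complex.
Import Order.TTheory GRing.Theory Num.Theory.

Set Implicit Arguments.
Unset Strict Implicit.
Unset Printing Implicit Defensive.

Local Open Scope classical_set_scope.
Local Open Scope ring_scope.

Section HilbertDefs.
Variable R : realType.
Local Notation C := R[i].

Definition is_inner_product (H : lmodType C) (ip : H -> H -> C) : Prop :=
  [/\ (forall (a : C) (x y z : H), ip (a *: x + y) z = a * ip x z + ip y z),
      (forall x y : H, ip y x = ((ip x y)^*)%C),
      (forall x : H, 0 <= ip x x) &
      (forall x : H, ip x x = 0 -> x = 0)].

Definition hnorm (H : lmodType C) (ip : H -> H -> C) (x : H) : R :=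
  Num.sqrt (complex.Re (ip x x)).

Definition h_cauchy (H : lmodType C) (ip : H -> H -> C) (u : nat -> H) : Prop :=
  forall e : R, 0 < e -> exists N : nat, forall m n : nat,
    (N <= m)%N -> (N <= n)%N -> hnorm ip (u m - u n) < e.

Definition h_converges_to (H : lmodType C) (ip : H -> H -> C)
    (u : nat -> H) (l : H) : Prop :=
  forall e : R, 0 < e -> exists N : nat, forall n : nat,
    (N <= n)%N -> hnorm ip (u n - l) < e.

Definition is_separable_hilbert (H : lmodType C) (ip : H -> H -> C) : Prop :=
  [/\ is_inner_product ip,
      (forall u : nat -> H, h_cauchy ip u -> exists l, h_converges_to ip u l) &
      (exists s : nat -> H, forall (x : H) (e : R), 0 < e ->
          exists n, hnorm ip (x - s n) < e)].

Definition is_linear (H K : lmodType C) (T : H -> K) : Prop :=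
  forall (a : C) (x y : H), T (a *: x + y) = a *: T x + T y.

Definition bounded_linear (H K : lmodType C) (ipH : H -> H -> C)
    (ipK : K -> K -> C) (T : H -> K) : Prop :=
  is_linear T /\ exists M : R, forall x, hnorm ipK (T x) <= M * hnorm ipH x.

Definition opnorm (H K : lmodType C) (ipH : H -> H -> C)
    (ipK : K -> K -> C) (T : H -> K) : R :=
  sup [set hnorm ipK (T x) | x in [set x | hnorm ipH x <= 1]].

Definition closed_dd_nonneg_form (H : lmodType C) (ip : H -> H -> C)
    (D : set H) (a : H -> H -> C) : Prop :=
  [/\ D 0 /\ (forall (al : C) x y, D x -> D y -> D (al *: x + y)),
      (forall (al : C) x y z, D x -> D y -> D z ->
          a (al *: x + y) z = al * a x z + a y z /\
          a z (al *: x + y) = (al^*)%C * a z x + a z y),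
      (forall x, D x -> 0 <= a x x),
      (forall (x : H) (e : R), 0 < e -> exists2 y, D y & hnorm ip (x - y) < e) &
      (forall u : nat -> H, (forall n, D (u n)) ->
        (forall e : R, 0 < e -> exists N : nat, forall m n : nat,
           (N <= m)%N -> (N <= n)%N ->
           complex.Re (a (u m - u n) (u m - u n)) + hnorm ip (u m - u n) ^+ 2 < e) ->
        exists2 v, D v &
          (forall e : R, 0 < e -> exists N : nat, forall n : nat, (N <= n)%N ->
             complex.Re (a (u n - v) (u n - v)) + hnorm ip (u n - v) ^+ 2 < e))].

(* (DA, A) is the (self-adjoint) operator associated with the form (D, a)
   (first representation theorem): dom A = {u in D | exists w, a[u,v] = <w,v>
   for all v in D}, and a[u,v] = <A u, v>. *)
Definition associated_operator (H : lmodType C) (ip : H -> H -> C)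
    (D : set H) (a : H -> H -> C) (DA : set H) (A : H -> H) : Prop :=
  (forall u, DA u <-> (D u /\ exists w, forall v, D v -> a u v = ip w v)) /\
  (forall u v, DA u -> D v -> a u v = ip (A u) v).

Definition is_resolvent (H : lmodType C) (DA : set H) (A : H -> H)
    (Rv : H -> H) : Prop :=
  (forall f, DA (Rv f) /\ A (Rv f) + Rv f = f) /\
  (forall u, DA u -> Rv (A u + u) = u).

Definition real_spectrum (H : lmodType C) (ip : H -> H -> C) (T : H -> H) : set R :=
  [set lam : R | ~ exists S : H -> H, [/\ bounded_linear ip ip S,
      (forall x, S (T x - (lam%:C)%C *: x) = x) &
      (forall y, T (S y) - (lam%:C)%C *: S y = y)]].

(* dist_out(X, Y) = sup_{x in X} inf_{y in Y} |x - y|, sup over empty = 0,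
   inf over empty = +oo. *)
Definition dist_out (X Y : set R) : \bar R :=
  maxe 0%E (ereal_sup [set ereal_inf [set (`|x - y|)%:E | y in Y] | x in X]).

End HilbertDefs.

(* Main.v *)
Require Import Defs.
From HB Require Import structures.
From mathcomp Require Import all_boot all_order all_algebra.
From mathcomp Require Import boolp classical_sets reals constructive_ereal ereal.
From mathcomp Require Import complex.
From mathcomp Require Import ring lra.
Import Order.TTheory GRing.Theory Num.Theory.
Local Open Scope classical_set_scope.
Local Open Scope ring_scope.
Set Implicit Arguments.
Unset Strict Implicit.
Notation cRe := complex.Re.
Notation cIm := complex.Im.

Section Cx.
Variable R : realType.
Lemma cReM (x y : R[i]) : cRe (x * y) = cRe x * cRe y - cIm x * cIm y.
Proof. by case: x => a b; case: y => c d. Qed.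
Lemma cImM (x y : R[i]) : cIm (x * y) = cRe x * cIm y + cIm x * cRe y.
Proof. by case: x => a b; case: y => c d /=. Qed.
Lemma cReJ (x : R[i]) : cRe (x^*)%C = cRe x. Proof. by case: x. Qed.
Lemma cImJ (x : R[i]) : cIm (x^*)%C = - cIm x. Proof. by case: x. Qed.
Lemma cReD (x y : R[i]) : cRe (x + y) = cRe x + cRe y. Proof. by case: x; case: y. Qed.
Lemma cImD (x y : R[i]) : cIm (x + y) = cIm x + cIm y. Proof. by case: x; case: y. Qed.
Lemma cReC (t : R) : cRe (t%:C)%C = t. Proof. by []. Qed.
Lemma cImC (t : R) : cIm (t%:C)%C = 0. Proof. by []. Qed.
Lemma cRei : cRe ('i%C : R[i]) = 0. Proof. by []. Qed.
Lemma cImi : cIm ('i%C : R[i]) = 1. Proof. by []. Qed.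
Lemma cReN (x : R[i]) : cRe (- x) = - cRe x. Proof. by case: x. Qed.
Lemma cImN (x : R[i]) : cIm (- x) = - cIm x. Proof. by case: x. Qed.
Lemma cReB (x y : R[i]) : cRe (x - y) = cRe x - cRe y. Proof. by rewrite cReD cReN. Qed.
Lemma cImB (x y : R[i]) : cIm (x - y) = cIm x - cIm y. Proof. by rewrite cImD cImN. Qed.
Lemma cRe1 : cRe (1 : R[i]) = 1. Proof. by []. Qed.
Lemma cIm1 : cIm (1 : R[i]) = 0. Proof. by []. Qed.
Lemma cRe0 : cRe (0 : R[i]) = 0. Proof. by []. Qed.
Lemma cIm0 : cIm (0 : R[i]) = 0. Proof. by []. Qed.
Lemma ge0_ReIm (z : R[i]) : 0 <= z -> cIm z = 0 /\ 0 <= cRe z.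
Proof. rewrite lecE => /andP[/eqP H1 H2]; split=> //; by rewrite H1. Qed.
Lemma complex_ext (x y : R[i]) : cRe x = cRe y -> cIm x = cIm y -> x = y.
Proof. by case: x; case: y => /= ? ? ? ? -> ->. Qed.
Lemma conjD (x y : R[i]) : ((x + y)^*)%C = (x^*)%C + (y^*)%C.
Proof. by apply: complex_ext; rewrite ?cReD ?cImD ?cReJ ?cImJ ?cReD ?cImD // opprD. Qed.
Lemma conjM (x y : R[i]) : ((x * y)^*)%C = (x^*)%C * (y^*)%C.
Proof. apply: complex_ext; rewrite ?cReM ?cImM ?cReJ ?cImJ ?cReM ?cImM; ring. Qed.
Lemma conjN (x : R[i]) : ((- x)^*)%C = - (x^*)%C.
Proof. by apply: complex_ext; rewrite ?cReN ?cImN ?cReJ ?cImJ ?cReN ?cImN. Qed.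
Lemma cReCM (t : R) (z : R[i]) : cRe (t%:C%C * z) = t * cRe z.
Proof. by rewrite cReM cReC cImC mul0r subr0. Qed.

Lemma quadCS (A c P : R) : 0 <= P -> (forall t : R, 0 <= A + 2 * t * c + t ^+ 2 * P) ->
  c ^+ 2 <= A * P.
Proof.
move=> hP h.
have hA : 0 <= A by have := h 0; rewrite expr2; lra.
have [P0|Pn0] := eqVneq P 0.
  have [c0|cn0] := eqVneq c 0; first by rewrite c0 P0 expr2; lra.
  have := h (- (A + 1) / (2 * c)); rewrite P0 mulr0 addr0.
  have -> : 2 * (- (A + 1) / (2 * c)) * c = - (A + 1).
    by field; rewrite cn0.
  lra.
have Pp : 0 < P by rewrite lt_def Pn0.
have := h (- c / P).
have -> : A + 2 * (- c / P) * c + (- c / P) ^+ 2 * P = (A * P - c ^+ 2) / P.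
  by field.
by rewrite pmulr_lge0 ?invr_gt0 // subr_ge0.
Qed.
End Cx.

Section IP.
Variables (R : realType) (H : lmodType R[i]) (ip : H -> H -> R[i]).
Hypothesis hip : is_inner_product ip.
Local Notation nrm := (hnorm ip).

Lemma ipDl x y z : ip (x + y) z = ip x z + ip y z.
Proof. by case: hip => lin _ _ _; have := lin 1 x y z; rewrite scale1r mul1r. Qed.
Lemma ip0l z : ip 0 z = 0.
Proof. by apply: (addrI (ip 0 z)); rewrite -ipDl !addr0. Qed.
Lemma ipZl a x z : ip (a *: x) z = a * ip x z.
Proof. by case: hip => lin _ _ _; have := lin a x 0 z; rewrite !addr0 ip0l addr0. Qed.
Lemma ipNl x z : ip (- x) z = - ip x z.
Proof. by rewrite -scaleN1r ipZl mulN1r. Qed.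
Lemma ipBl x y z : ip (x - y) z = ip x z - ip y z.
Proof. by rewrite ipDl ipNl. Qed.
Lemma ipJ x y : ip y x = ((ip x y)^*)%C.
Proof. by case: hip => _ h _ _; apply: h. Qed.
Lemma ipDr z x y : ip z (x + y) = ip z x + ip z y.
Proof. by rewrite ipJ ipDl conjD -!ipJ. Qed.
Lemma ipZr z a x : ip z (a *: x) = (a^*)%C * ip z x.
Proof. by rewrite ipJ ipZl conjM -ipJ. Qed.
Lemma ip0r z : ip z 0 = 0.
Proof. by rewrite ipJ ip0l conjc0. Qed.
Lemma ipNr z x : ip z (- x) = - ip z x.
Proof. by rewrite ipJ ipNl conjN -ipJ. Qed.
Lemma ipBr z x y : ip z (x - y) = ip z x - ip z y.
Proof. by rewrite ipDr ipNr. Qed.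
Lemma ipxx_ge0 x : 0 <= ip x x.
Proof. by case: hip => _ _ + _; apply. Qed.
Lemma ipxx_eq0 x : ip x x = 0 -> x = 0.
Proof. by case: hip => _ _ _; apply. Qed.
Lemma Im_ipxx x : cIm (ip x x) = 0.
Proof. by case: (ge0_ReIm (ipxx_ge0 x)). Qed.
Lemma Re_ipxx_ge0 x : 0 <= cRe (ip x x).
Proof. by case: (ge0_ReIm (ipxx_ge0 x)). Qed.
Lemma nrm_sqr x : nrm x ^+ 2 = cRe (ip x x).
Proof. by rewrite /hnorm sqr_sqrtr // Re_ipxx_ge0. Qed.
Lemma nrm_ge0 x : 0 <= nrm x.
Proof. exact: sqrtr_ge0. Qed.
Lemma nrm_eq0 x : nrm x = 0 -> x = 0.
Proof.
move=> /eqP; rewrite /hnorm sqrtr_eq0 => hle.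
apply: ipxx_eq0; apply: complex_ext; rewrite ?Im_ipxx //.
by apply/eqP; rewrite eq_le hle Re_ipxx_ge0.
Qed.
Lemma nrm0 : nrm 0 = 0.
Proof. by rewrite /hnorm ip0l sqrtr0. Qed.
Lemma nrm_gt0 x : x <> 0 -> 0 < nrm x.
Proof. by move=> hx; rewrite lt_def nrm_ge0 andbT; apply/eqP => /nrm_eq0. Qed.
Lemma Re_ipC x y : cRe (ip y x) = cRe (ip x y).
Proof. by rewrite ipJ cReJ. Qed.
Lemma Re_ipZl (t : R) x y : cRe (ip (t%:C%C *: x) y) = t * cRe (ip x y).
Proof. by rewrite ipZl cReCM. Qed.
Lemma Re_ipZr (t : R) x y : cRe (ip x (t%:C%C *: y)) = t * cRe (ip x y).
Proof. by rewrite ipZr conjc_real cReCM. Qed.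
Lemma nrmZ (t : R) x : nrm (t%:C%C *: x) = `|t| * nrm x.
Proof.
rewrite /hnorm Re_ipZl Re_ipZr mulrA -expr2 sqrtrM ?sqr_ge0 //.
by rewrite sqrtr_sqr.
Qed.
Lemma nrmN x : nrm (- x) = nrm x.
Proof. by rewrite /hnorm ipNl ipNr opprK. Qed.
Lemma nrmB x y : nrm (x - y) = nrm (y - x).
Proof. by rewrite -nrmN opprB. Qed.
Lemma nrm_sqrD x y :
  nrm (x + y) ^+ 2 = nrm x ^+ 2 + 2 * cRe (ip x y) + nrm y ^+ 2.
Proof.
rewrite !nrm_sqr ipDl !ipDr !cReD (Re_ipC x y); ring.
Qed.
Lemma nrm_sqrB x y :
  nrm (x - y) ^+ 2 = nrm x ^+ 2 - 2 * cRe (ip x y) + nrm y ^+ 2.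
Proof. by rewrite nrm_sqrD nrmN ipNr cReN mulrN. Qed.

Lemma form_CS (b : H -> H -> R) :
  (forall x, 0 <= b x x) ->
  (forall x y (t : R), b (x + t%:C%C *: y) (x + t%:C%C *: y)
       = b x x + 2 * t * b x y + t ^+ 2 * b y y) ->
  forall x y, b x y ^+ 2 <= b x x * b y y.
Proof.
move=> h0 hexp x y; apply: quadCS => // t.
by rewrite -hexp.
Qed.

Lemma CS2 x y : cRe (ip x y) ^+ 2 <= nrm x ^+ 2 * nrm y ^+ 2.
Proof.
rewrite !nrm_sqr; apply: (form_CS (b := fun x y => cRe (ip x y))).
  exact: Re_ipxx_ge0.
move=> u v t; rewrite -!nrm_sqr nrm_sqrD nrmZ exprMn real_normK ?num_real // Re_ipZr.
ring.
Qed.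
Lemma CS x y : `|cRe (ip x y)| <= nrm x * nrm y.
Proof.
rewrite -ler_sqr ?nnegrE ?mulr_ge0 ?nrm_ge0 //.
by rewrite exprMn real_normK ?num_real // CS2.
Qed.
Lemma CS' x y : cRe (ip x y) <= nrm x * nrm y.
Proof. exact: le_trans (ler_norm _) (CS x y). Qed.
Lemma nrm_triangle x y : nrm (x + y) <= nrm x + nrm y.
Proof.
rewrite -ler_sqr ?nnegrE ?addr_ge0 ?nrm_ge0 //.
rewrite nrm_sqrD sqrrD; have := CS' x y; lra.
Qed.
Lemma nrm_triangleB x y : nrm (x - y) <= nrm x + nrm y.
Proof. by rewrite -(nrmN y) nrm_triangle. Qed.
Lemma nrm_le_eps x : (forall e : R, 0 < e -> nrm x <= e) -> x = 0.
Proof.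
move=> h; apply: nrm_eq0; apply/eqP; rewrite eq_le nrm_ge0 andbT.
apply/ler_addgt0Pr => e he; rewrite add0r; exact: h.
Qed.
End IP.

Section Geo.
Variable R : realType.
Lemma bernoulli (h : R) n : 0 <= h -> 1 + n%:R * h <= (1 + h) ^+ n.
Proof.
move=> h0; elim: n => [|n IH]; first by rewrite expr0 mul0r addr0.
rewrite exprS -natr1.
have hn : 0 <= n%:R * h by rewrite mulr_ge0.
have : (1 + h) * (1 + n%:R * h) <= (1 + h) * (1 + h) ^+ n.
  by rewrite ler_pM2l //; lra.
nra.
Qed.
Lemma geo (q e : R) : 0 <= q -> q < 1 -> 0 < e -> exists N : nat, q ^+ N < e.
Proof.
move=> q0 q1 e0.
have [->|qn0] := eqVneq q 0; first by exists 1%N; rewrite expr1.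
have qp : 0 < q by rewrite lt_def qn0.
pose h := q^-1 - 1.
have hp : 0 < h by rewrite /h subr_gt0 invf_gt1.
pose N := Num.bound ((e * h)^-1).
exists N.
have hN : (e * h)^-1 < N%:R by apply: archi_boundP; rewrite invr_ge0 mulr_ge0 // ltW.
have hb := bernoulli N (ltW hp).
have e1 : 1 + h = q^-1 by rewrite /h addrC subrK.
have qNp : 0 < q ^+ N by rewrite exprn_gt0.
rewrite e1 exprVn in hb.
have hb' : 1 + N%:R * h <= (q ^+ N)^-1 by [].
have h2 : e^-1 < N%:R * h.
  by rewrite -ltr_pdivrMr // -invfM.
have h3 : e^-1 < (q ^+ N)^-1 by apply: (lt_le_trans _ hb'); lra.
by rewrite -(invrK e) -[q ^+ N]invrK ltf_pV2 ?posrE ?invr_gt0.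
Qed.
End Geo.

Lemma RCM (R : realType) (a b : R) : (a%:C * b%:C)%C = ((a * b)%:C)%C :> R[i].
Proof. by apply: complex_ext; rewrite ?cReM ?cImM /= ?cReC ?cImC; ring. Qed.
Lemma RC1 (R : realType) : ((1 : R)%:C)%C = 1 :> R[i].
Proof. by []. Qed.
Lemma RCD (R : realType) (a b : R) : ((a + b)%:C)%C = (a%:C + b%:C)%C :> R[i].
Proof. by apply: complex_ext; rewrite ?cReD ?cImD /= ; rewrite ?addr0. Qed.
Lemma RCN (R : realType) (a : R) : ((- a)%:C)%C = - (a%:C)%C :> R[i].
Proof. by apply: complex_ext; rewrite ?cReN ?cImN /= ?oppr0. Qed.

Section Lin.
Variables (R : realType) (H K : lmodType R[i]) (T : H -> K).
Hypothesis hT : is_linear T.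
Lemma linD x y : T (x + y) = T x + T y.
Proof. by have := hT 1 x y; rewrite !scale1r. Qed.
Lemma lin0 : T 0 = 0.
Proof. by apply: (addrI (T 0)); rewrite -linD !addr0. Qed.
Lemma linZ a x : T (a *: x) = a *: T x.
Proof. by have := hT a x 0; rewrite !addr0 lin0 addr0. Qed.
Lemma linN x : T (- x) = - T x.
Proof. by rewrite -scaleN1r linZ scaleN1r. Qed.
Lemma linB x y : T (x - y) = T x - T y.
Proof. by rewrite linD linN. Qed.
End Lin.

Lemma is_linear_shift (R : realType) (H : lmodType R[i]) (T : H -> H) (lam : R[i]) :
  is_linear T -> is_linear (fun x => T x - lam *: x).
Proof.
move=> hT a x y; rewrite hT scalerDr scalerBr !scalerA mulrC.
rewrite opprD !addrA; congr (_ + _); rewrite -!addrA; congr (_ + _); by rewrite addrC.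
Qed.

Section Spec.
Variables (R : realType) (H : lmodType R[i]) (ip : H -> H -> R[i]).
Hypothesis hip : is_inner_product ip.
Local Notation nrm := (hnorm ip).

Lemma inv_bb (T : H -> H) (lam : R) :
  (exists S : H -> H, [/\ bounded_linear ip ip S,
      (forall x, S (T x - (lam%:C)%C *: x) = x) &
      (forall y, T (S y) - (lam%:C)%C *: S y = y)]) ->
  exists N : R, 0 < N /\ forall x, nrm x <= N * nrm (T x - (lam%:C)%C *: x).
Proof.
move=> [S [[_ [M hM]] h1 _]].
exists (`|M| + 1); split; first by rewrite ltr_pwDr // normr_ge0.
move=> x; rewrite -{1}(h1 x).
apply: (le_trans (hM _)); apply: ler_wpM2r; first exact: nrm_ge0.
by rewrite (le_trans (ler_norm M)) // lerDl.
Qed.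

Lemma notspec_bb (T : H -> H) (lam : R) : ~ real_spectrum ip T lam ->
  exists N : R, 0 < N /\ forall x, nrm x <= N * nrm (T x - (lam%:C)%C *: x).
Proof. by move=> /contrapT; apply: inv_bb. Qed.

Lemma approx_spec (T : H -> H) (lam : R) :
  (forall e : R, 0 < e -> exists x, nrm (T x - (lam%:C)%C *: x) < e * nrm x) ->
  real_spectrum ip T lam.
Proof.
move=> h hS; have [N [N0 hN]] := inv_bb hS.
have Ni : 0 < N^-1 by rewrite invr_gt0.
have [x hx] := h _ Ni.
have h3 : N * nrm (T x - (lam%:C)%C *: x) < N * (N^-1 * nrm x) by rewrite ltr_pM2l.
rewrite mulrA mulfV ?gt_eqF // mul1r in h3.
by have := le_lt_trans (hN x) h3; rewrite ltxx.
Qed.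
End Spec.

Lemma subBB (V : zmodType) (a b c d : V) : (a - b) - (c - d) = (a - c) - (b - d).
Proof. by rewrite !opprB !addrA -(addrAC a d) addrAC -(addrAC a d) addrAC. Qed.
Lemma addBB (V : zmodType) (a b c : V) : (a + b) - (a + c) = b - c.
Proof. by rewrite opprD addrACA subrr add0r. Qed.
Lemma scaleRC (R : realType) (V : lmodType R[i]) (a b : R) (v : V) :
  (a%:C)%C *: ((b%:C)%C *: v) = ((a * b)%:C)%C *: v.
Proof. by rewrite scalerA RCM. Qed.

Section Invert.
Variables (R : realType) (H : lmodType R[i]) (ip : H -> H -> R[i]).
Hypothesis hip : is_inner_product ip.
Local Notation nrm := (hnorm ip).
Hypothesis complete : forall u : nat -> H, h_cauchy ip u -> exists l, h_converges_to ip u l.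

Lemma nrm_sub0 x y : nrm (x - y) <= 0 -> x = y.
Proof.
move=> h; apply/eqP; rewrite -subr_eq0; apply/eqP; apply: (nrm_eq0 hip).
by apply/eqP; rewrite eq_le h nrm_ge0.
Qed.

Variables (T : H -> H) (M k : R).
Hypotheses (hT : is_linear T)
  (hsym : forall x y, cRe (ip (T x) y) = cRe (ip x (T y)))
  (k0 : 0 < k) (kM : k <= M)
  (hM : forall x, nrm (T x) <= M * nrm x)
  (hk : forall x, k * nrm x <= nrm (T x)).

Lemma T_inj x y : T x = T y -> x = y.
Proof.
move=> e; apply: nrm_sub0.
have := hk (x - y); rewrite (linB hT) e subrr (nrm0 hip) => h.
by rewrite -(pmulr_rle0 _ k0).
Qed.

Lemma T_surj f : exists y, T y = f.
Proof.
have M0 : 0 < M by exact: lt_le_trans kM.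
pose c := (M ^+ 2)^-1.
have c0 : 0 < c by rewrite invr_gt0 exprn_gt0.
have cM : M ^+ 2 * c = 1 by rewrite mulfV // gt_eqF // exprn_gt0.
have [K Kdef] : exists K : H -> H, forall x, K x = x - (c%:C)%C *: T (T x)
  by exists (fun x => x - (c%:C)%C *: T (T x)).
have KB x y : K x - K y = K (x - y).
  by rewrite !Kdef subBB !(linB hT) scalerBr.
have K0 : K 0 = 0 by rewrite Kdef !(lin0 hT) scaler0 subr0.
pose q2 := 1 - c * k ^+ 2.
have q20 : 0 <= q2.
  rewrite /q2 subr_ge0 mulrC ler_pdivrMr ?exprn_gt0 // mul1r.
  by rewrite ler_sqr ?nnegrE ?(ltW k0) ?(ltW M0).
have q21 : q2 < 1 by rewrite /q2 ltrBlDr ltrDl mulr_gt0 // exprn_gt0.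
pose q := Num.sqrt q2.
have q0 : 0 <= q by exact: sqrtr_ge0.
have q1 : q < 1 by rewrite /q -sqrtr1 ltr_sqrt.
have hK x : nrm (K x) <= q * nrm x.
  rewrite -ler_sqr ?nnegrE ?mulr_ge0 ?nrm_ge0 // exprMn [q ^+ 2]sqr_sqrtr //.
  rewrite Kdef (nrm_sqrB hip) Re_ipZr // (nrmZ hip) (ger0_norm (ltW c0)).
  rewrite -hsym -(nrm_sqr hip).
  have h1 := hM (T x).
  have h2 := hk x.
  have t0 := nrm_ge0 ip (T x).
  have t1 := nrm_ge0 ip (T (T x)).
  have t2 := nrm_ge0 ip x.
  have h1' : nrm (T (T x)) ^+ 2 <= M ^+ 2 * nrm (T x) ^+ 2.
    by rewrite -exprMn ler_sqr ?nnegrE ?mulr_ge0 // ltW.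
  have h2' : k ^+ 2 * nrm x ^+ 2 <= nrm (T x) ^+ 2.
    by rewrite -exprMn ler_sqr ?nnegrE ?mulr_ge0 // ltW.
  rewrite /q2.
  have e1 : (c * nrm (T (T x))) ^+ 2 <= c * nrm (T x) ^+ 2.
    rewrite exprMn expr2 -mulrA ler_pM2l //.
    apply: (le_trans (ler_wpM2l (ltW c0) h1')).
    by rewrite mulrA mulrC (mulrC c) cM mulr1.
  have e2 : c * (k ^+ 2 * nrm x ^+ 2) <= c * nrm (T x) ^+ 2 by rewrite ler_pM2l.
  nra.
pose g := (c%:C)%C *: f.
pose xs := fix xs n := if n is n'.+1 then g + K (xs n') else 0.
have xsS n : xs n.+1 = g + K (xs n) by [].
have hdiff n : nrm (xs n.+1 - xs n) <= q ^+ n * nrm g.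
  elim: n => [|n IH]; first by rewrite /= K0 !addr0 subr0 expr0 mul1r.
  rewrite xsS (xsS n) addBB KB.
  by apply: (le_trans (hK _)); rewrite exprS -mulrA ler_wpM2l.
have g0 := nrm_ge0 ip g.
have hcau n i : nrm (xs (n + i)%N - xs n) <= (q ^+ n - q ^+ (n + i)) / (1 - q) * nrm g.
  elim: i => [|i IH]; first by rewrite addn0 !subrr (nrm0 hip) !mul0r.
  rewrite addnS -(subrK (xs (n + i)%N) (xs (n + i).+1)) -addrA.
  apply: (le_trans (nrm_triangle hip _ _)).
  apply: (le_trans (lerD (hdiff _) IH)).
  have -> : q ^+ (n + i) * nrm g + (q ^+ n - q ^+ (n + i)) / (1 - q) * nrm g
     = (q ^+ (n + i) * (1 - q) + (q ^+ n - q ^+ (n + i))) / (1 - q) * nrm g.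
    by field; rewrite subr_eq0 eq_sym lt_eqF.
  rewrite exprS; apply: ler_wpM2r => //; apply: ler_wpM2r; first by rewrite invr_ge0 subr_ge0 ltW.
  lra.
have hcau' n m : (n <= m)%N -> nrm (xs m - xs n) <= q ^+ n / (1 - q) * nrm g.
  move=> /subnKC <-; apply: (le_trans (hcau _ _)); apply: ler_wpM2r => //.
  apply: ler_wpM2r; first by rewrite invr_ge0 subr_ge0 ltW.
  by rewrite lerBlDr lerDl exprn_ge0.
have cauchy : h_cauchy ip xs.
  move=> e e0.
  have e'0 : 0 < e * (1 - q) / (nrm g + 1).
    by rewrite mulr_gt0 ?mulr_gt0 ?invr_gt0 ?subr_gt0 // ltr_pwDr.
  have [N hN] := geo q0 q1 e'0.
  have key n : (N <= n)%N -> q ^+ n / (1 - q) * nrm g < e.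
    move=> hn.
    have h1 : q ^+ n <= q ^+ N by apply: ler_wiXn2l => //; exact: ltW.
    have h2 : q ^+ n < e * (1 - q) / (nrm g + 1) by exact: le_lt_trans hN.
    have q1' : 0 < 1 - q by rewrite subr_gt0.
    have h3 : q ^+ n / (1 - q) < e / (nrm g + 1).
      by rewrite ltr_pdivrMr // mulrAC.
    have h4 : 0 <= q ^+ n / (1 - q) by rewrite divr_ge0 ?exprn_ge0 // ltW.
    have h5 : e / (nrm g + 1) * nrm g < e.
      by rewrite mulrAC ltr_pdivrMr ?ltr_pwDr // ltr_pM2l // ltrDl.
    apply: le_lt_trans h5; apply: ler_wpM2r => //; exact: ltW.
  exists N => m n hm hn.
  have [nm|mn] := leqP n m.
    exact: le_lt_trans (hcau' _ _ nm) (key _ hn).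
  rewrite (nrmB hip); exact: le_lt_trans (hcau' _ _ (ltnW mn)) (key _ hm).
have [l hl] := complete cauchy.
have hfix : l = g + K l.
  apply/eqP; rewrite -subr_eq0; apply/eqP; apply: (nrm_le_eps hip) => e e0.
  have e20 : 0 < e / 2 by rewrite divr_gt0.
  have [N hN] := hl _ e20.
  have -> : l - (g + K l) = (l - xs N.+1) + K (xs N - l).
    by rewrite -KB xsS !opprD !addrA subrK.
  apply: (le_trans (nrm_triangle hip _ _)).
  rewrite (nrmB hip l).
  have h1 := hN N.+1 (leqnSn N); have h2 := hN N (leqnn N).
  have h3 := hK (xs N - l).
  have h4 : q * nrm (xs N - l) <= nrm (xs N - l).
    by rewrite ler_piMl ?nrm_ge0 // ltW.
  lra.
have hg : g = (c%:C)%C *: T (T l).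
  move: hfix; rewrite Kdef => /(congr1 (fun z => z - (l - (c%:C)%C *: T (T l)))).
  by rewrite addrK => <-; rewrite opprB addrC subrK.
exists (T l).
have : ((M ^+ 2)%:C)%C *: g = ((M ^+ 2)%:C)%C *: ((c%:C)%C *: T (T l)) by rewrite hg.
by rewrite /g !scaleRC cM RC1 !scale1r => ->.
Qed.

Lemma invert : exists S : H -> H,
  [/\ bounded_linear ip ip S, forall x, S (T x) = x & forall y, T (S y) = y].
Proof.
pose S f := projT1 (cid (T_surj f)).
have hS f : T (S f) = f := projT2 (cid (T_surj f)).
exists S; split => //; last by move=> x; apply: T_inj; rewrite hS.
split.
  move=> a x y; apply: T_inj; by rewrite hS hT !hS.
exists k^-1 => x; have := hk (S x); rewrite hS => h.
by rewrite mulrC ler_pdivlMr // mulrC.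
Qed.
End Invert.

Section Shift.
Variables (R : realType) (H : lmodType R[i]) (ip : H -> H -> R[i]).
Hypothesis hip : is_inner_product ip.
Local Notation nrm := (hnorm ip).
Variables (T : H -> H).
Hypotheses (hT : is_linear T)
  (hsym : forall x y, cRe (ip (T x) y) = cRe (ip x (T y)))
  (hb : forall x, nrm (T x) <= nrm x).

Lemma shift_sym (lam : R) x y :
  cRe (ip (T x - (lam%:C)%C *: x) y) = cRe (ip x (T y - (lam%:C)%C *: y)).
Proof.
by rewrite (ipBl hip) (ipBr hip) !cReB (Re_ipZl hip) (Re_ipZr hip) hsym.
Qed.

Lemma shift_bd (lam : R) x :
  nrm (T x - (lam%:C)%C *: x) <= (1 + `|lam|) * nrm x.
Proof.
apply: (le_trans (nrm_triangleB hip _ _)); rewrite (nrmZ hip) mulrDl mul1r.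
by rewrite lerD2r.
Qed.

Lemma nrm_normalize x : x <> 0 -> nrm (((nrm x)^-1)%:C%C *: x) = 1.
Proof.
move=> hx; have n0 := nrm_gt0 hip hx.
by rewrite (nrmZ hip) ger0_norm ?invr_ge0 ?ltW // mulVf // gt_eqF.
Qed.

Hypothesis complete : forall u : nat -> H, h_cauchy ip u -> exists l, h_converges_to ip u l.

Lemma approx_eig (lam : R) : real_spectrum ip T lam ->
  forall e : R, 0 < e -> exists u, nrm u = 1 /\ nrm (T u - (lam%:C)%C *: u) < e.
Proof.
move=> hspec e e0; apply: contrapT => hno; apply: hspec.
pose T' x := T x - (lam%:C)%C *: x.
have hT' : is_linear T' by exact: is_linear_shift.
pose k := Order.min e 1.
have k0 : 0 < k by rewrite /k lt_min e0 ltr01.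
have kM : k <= 1 + `|lam|.
  by rewrite /k ge_min lerDl normr_ge0 orbT.
have hk x : k * nrm x <= nrm (T' x).
  have [->|xn0] := eqVneq x 0; first by rewrite (nrm0 hip) mulr0 nrm_ge0.
  have xne : x <> 0 by apply/eqP.
  have n0 := nrm_gt0 hip xne.
  pose u := ((nrm x)^-1)%:C%C *: x.
  have hu : nrm u = 1 by exact: nrm_normalize.
  have hge : e <= nrm (T' u).
    by rewrite leNgt; apply/negP => hlt; apply: hno; exists u.
  have : nrm (T' u) = (nrm x)^-1 * nrm (T' x).
    by rewrite /u (linZ hT') (nrmZ hip) ger0_norm // invr_ge0 ltW.
  move=> e1; rewrite e1 in hge.
  have km : k <= e by rewrite /k ge_min lexx.
  apply: (le_trans (ler_wpM2r (nrm_ge0 ip x) km)).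
  by rewrite mulrC -ler_pdivlMl.
have [S [hS h1 h2]] := invert hip complete hT' (shift_sym lam) k0 kM (shift_bd lam) hk.
by exists S; split.
Qed.
End Shift.

Section Near.
Variables (R : realType) (H : lmodType R[i]) (ip : H -> H -> R[i]).
Hypothesis hip : is_inner_product ip.
Local Notation nrm := (hnorm ip).
Variables (T : H -> H).
Hypotheses (hT : is_linear T)
  (hsym : forall x y, cRe (ip (T x) y) = cRe (ip x (T y)))
  (hb : forall x, nrm (T x) <= nrm x).

Lemma spec_near (lam rho : R) (w : H) : w <> 0 ->
  nrm (T w - (lam%:C)%C *: w) <= rho * nrm w ->
  exists mu, real_spectrum ip T mu /\ `|lam - mu| <= rho.
Proof.
move=> w0 hw.
have [B Bdef] : exists B : H -> H, forall x, B x = T x - (lam%:C)%C *: x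
  by exists (fun x => T x - (lam%:C)%C *: x).
have hBlin : is_linear B.
  by move=> a x y; rewrite !Bdef; apply: is_linear_shift.
have hBsym x y : cRe (ip (B x) y) = cRe (ip x (B y)).
  by rewrite !Bdef (shift_sym hip hsym).
pose L := 1 + `|lam|.
have L0 : 0 < L by rewrite /L ltr_pwDl.
have hBb x : nrm (B x) <= L * nrm x by rewrite Bdef (shift_bd hip hb).
have nw := nrm_gt0 hip w0.
have rho0 : 0 <= rho.
  have := le_trans (nrm_ge0 ip _) hw; by rewrite pmulr_lge0.
pose Q := [set r : R | exists2 x, x <> 0 & r = nrm (B x) ^+ 2 / nrm x ^+ 2].
have hlb : has_lbound Q.
  by exists 0 => r [x _ ->]; rewrite divr_ge0 ?sqr_ge0.
have hne : Q !=set0 by exists (nrm (B w) ^+ 2 / nrm w ^+ 2); exists w.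
have hinf : has_inf Q by split.
pose m := inf Q.
have m0 : 0 <= m.
  by apply: lb_le_inf => // r [x _ ->]; rewrite divr_ge0 ?sqr_ge0.
have hmx x : m * nrm x ^+ 2 <= nrm (B x) ^+ 2.
  have [->|xn0] := eqVneq x 0; first by rewrite (nrm0 hip) expr0n /= mulr0 sqr_ge0.
  have xne : x <> 0 by apply/eqP.
  have nx := nrm_gt0 hip xne.
  have := ge_inf hlb (ex_intro2 _ _ x xne erefl).
  by rewrite ler_pdivlMr ?exprn_gt0.
have mrho : m <= rho ^+ 2.
  apply: (le_trans (ge_inf hlb (ex_intro2 _ _ w w0 erefl))).
  rewrite ler_pdivrMr ?exprn_gt0 // -exprMn ler_sqr ?nnegrE ?mulr_ge0 ?nrm_ge0 //.
  by rewrite Bdef.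
pose s := Num.sqrt m.
have s0 : 0 <= s := sqrtr_ge0 m.
have ss : s ^+ 2 = m by rewrite sqr_sqrtr.
have srho : s <= rho.
  by rewrite -ler_sqr ?nnegrE // ss.
pose b x y := cRe (ip (B x) (B y)) - m * cRe (ip x y).
have bxx x : 0 <= b x x by rewrite /b -!(nrm_sqr hip) subr_ge0 hmx.
have bexp x y (t : R) : b (x + t%:C%C *: y) (x + t%:C%C *: y)
    = b x x + 2 * t * b x y + t ^+ 2 * b y y.
  rewrite /b (linD hBlin) (linZ hBlin) !(ipDl hip) !(ipDr hip) !cReD.
  rewrite !(Re_ipZl hip) !(Re_ipZr hip) (Re_ipC hip (B y) (B x)) (Re_ipC hip y x).
  ring.
have bCS x y := form_CS bxx bexp x y.
pose P x := B (B x) - (m%:C)%C *: x.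
have hP x y : cRe (ip (P x) y) = b x y.
  by rewrite /P /b (ipBl hip) cReB (Re_ipZl hip) hBsym.
have hPx x : nrm (P x) ^+ 2 <= L ^+ 2 * b x x.
  have e1 : nrm (P x) ^+ 2 = b x (P x) by rewrite (nrm_sqr hip) hP.
  have e2 : b (P x) (P x) <= L ^+ 2 * nrm (P x) ^+ 2.
    rewrite /b -!(nrm_sqr hip).
    have := hBb (P x); have := nrm_ge0 ip (B (P x)); have := nrm_ge0 ip (P x).
    move=> h1 h2 h3.
    have h4 : nrm (B (P x)) ^+ 2 <= (L * nrm (P x)) ^+ 2.
      by rewrite ler_sqr ?nnegrE ?mulr_ge0 // ltW.
    have h5 : 0 <= m * nrm (P x) ^+ 2 by rewrite mulr_ge0 ?sqr_ge0.
    rewrite exprMn in h4; lra.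
  have := bCS x (P x); rewrite -e1 => h.
  set p := nrm (P x) ^+ 2 in e1 e2 h *.
  have p0 : 0 <= p by rewrite sqr_ge0.
  have [->|pn0] := eqVneq p 0; first by rewrite mulr_ge0 ?sqr_ge0.
  have pp : 0 < p by rewrite lt_def pn0.
  have h' : p * p <= (L ^+ 2 * b x x) * p.
    rewrite -expr2 (mulrC (L ^+ 2)) -mulrA; apply: (le_trans h); by rewrite ler_wpM2l.
  by rewrite -(ler_pM2r pp).
have [hs|hns] := pselect (real_spectrum ip T (lam - s)).
  exists (lam - s); split => //.
  by rewrite opprB addrC subrK ger0_norm.
have [N [N0 hN]] := notspec_bb hns.
exists (lam + s); split; last by rewrite opprD addrA subrr add0r normrN ger0_norm.
apply: approx_spec => e e0.
pose d := (e / (L * N)) ^+ 2.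
have d0 : 0 < d by rewrite exprn_gt0 // divr_gt0 // mulr_gt0.
have [r [x xne ->] hr] := inf_adherent d0 hinf.
have nx := nrm_gt0 hip xne.
have hbx : b x x < d * nrm x ^+ 2.
  rewrite ltr_pdivrMr ?exprn_gt0 // mulrDl in hr.
  rewrite /b -!(nrm_sqr hip); lra.
have hyB : T x - ((lam - s)%:C)%C *: x = B x + (s%:C)%C *: x.
  by rewrite Bdef RCD RCN scalerDl scaleNr opprD opprK addrA.
exists (T x - ((lam - s)%:C)%C *: x).
have hny := hN x.
rewrite hyB in hny *.
have -> : T (B x + (s%:C)%C *: x) - ((lam + s)%:C)%C *: (B x + (s%:C)%C *: x) = P x.
  rewrite RCD scalerDl opprD addrA -Bdef (linD hBlin) (linZ hBlin).
  rewrite scalerDr scaleRC -expr2 ss (addrC (B (B x))) addBB.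
  done.
rewrite -ltr_sqr ?nnegrE ?mulr_ge0 ?nrm_ge0 ?(ltW e0) //.
have h1 := hPx x.
have h2 : L ^+ 2 * b x x < L ^+ 2 * (d * nrm x ^+ 2) by rewrite ltr_pM2l ?exprn_gt0.
have h3 : nrm x ^+ 2 <= N ^+ 2 * nrm (B x + (s%:C)%C *: x) ^+ 2.
  by rewrite -exprMn ler_sqr ?nnegrE ?mulr_ge0 ?nrm_ge0 ?(ltW N0).
have h4 : L ^+ 2 * (d * nrm x ^+ 2) <= L ^+ 2 * (d * (N ^+ 2 * nrm (B x + (s%:C)%C *: x) ^+ 2)).
  by rewrite ler_pM2l ?exprn_gt0 // ler_pM2l.
have e5 : L ^+ 2 * (d * (N ^+ 2 * nrm (B x + (s%:C)%C *: x) ^+ 2))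
   = (e * nrm (B x + (s%:C)%C *: x)) ^+ 2.
  by rewrite /d; field; rewrite !gt_eqF.
rewrite -e5; exact: le_lt_trans h1 (lt_le_trans h2 h4).
Qed.
End Near.

Section Res.
Variables (R : realType) (H : lmodType R[i]) (ip : H -> H -> R[i]).
Hypothesis hip : is_inner_product ip.
Local Notation nrm := (hnorm ip).
Variables (D : set H) (a : H -> H -> R[i]) (DA : set H) (A : H -> H) (Rs : H -> H).
Hypotheses (ha : closed_dd_nonneg_form ip D a) (hA : associated_operator ip D a DA A)
  (hRs : is_resolvent DA A Rs).

Lemma herm u v : D u -> D v -> a u v = ((a v u)^*)%C.
Proof.
case: ha => [[_ hcl] hses hpos _ _] Du Dv.
have cIm0 w : D w -> cIm (a w w) = 0 by move=> Dw; case: (ge0_ReIm (hpos w Dw)).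
have D1 := hcl 1 u v Du Dv.
have D2 := hcl 'i%C u v Du Dv.
have e1 := cIm0 _ D1.
have e2 := cIm0 _ D2.
case: (hses 1 u v (1 *: u + v) Du Dv D1) => ha1 _.
case: (hses 1 u v u Du Dv Du) => _ hb1.
case: (hses 1 u v v Du Dv Dv) => _ hc1.
rewrite ha1 hb1 hc1 in e1.
case: (hses 'i%C u v ('i%C *: u + v) Du Dv D2) => ha2 _.
case: (hses 'i%C u v u Du Dv Du) => _ hb2.
case: (hses 'i%C u v v Du Dv Dv) => _ hc2.
rewrite ha2 hb2 hc2 in e2.
have u0 := cIm0 _ Du; have v0 := cIm0 _ Dv.
move: e1 e2; rewrite !cImD !cImM ?cReM ?cImM ?cReD ?cImD ?cReJ ?cImJ /=; rewrite ?cReM ?cImM /=.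
move=> e1 e2; apply: (@complex_ext R); rewrite ?cReJ ?cImJ; lra.
Qed.

Lemma DA_D u : DA u -> D u.
Proof. by case: hA => h _ /h []. Qed.
Lemma Rs_DA f : DA (Rs f).
Proof. by case: hRs => h _; case: (h f). Qed.
Lemma Rs_D f : D (Rs f).
Proof. exact: DA_D (Rs_DA f). Qed.
Lemma Rs_eq f : A (Rs f) + Rs f = f.
Proof. by case: hRs => h _; case: (h f). Qed.
Lemma ARs f : A (Rs f) = f - Rs f.
Proof. by rewrite -{2}(Rs_eq f) addrK. Qed.
Lemma a_ip u v : DA u -> D v -> a u v = ip (A u) v.
Proof. by case: hA => _ h; apply: h. Qed.

Lemma Rs_sym f g : ip (Rs f) g = ip f (Rs g).
Proof.
rewrite -{1}(Rs_eq g) -{2}(Rs_eq f) (ipDr hip) (ipDl hip); congr (_ + _).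
rewrite -(a_ip (Rs_DA f) (Rs_D g)) (ipJ hip) -(a_ip (Rs_DA g) (Rs_D f)).
by rewrite (herm (Rs_D g) (Rs_D f)) conjcK.
Qed.

Lemma Rs_lin : is_linear Rs.
Proof.
move=> al x y; apply/eqP; rewrite -subr_eq0; apply/eqP; apply: (ipxx_eq0 hip).
set e := _ - _.
rewrite {1}/e (ipBl hip) (ipDl hip) (ipZl hip) !Rs_sym (ipDl hip) (ipZl hip).
by rewrite subrr.
Qed.

Lemma Rs_bd f : nrm (Rs f) <= nrm f.
Proof.
case: ha => _ _ hpos _ _.
have hp : 0 <= cRe (a (Rs f) (Rs f)) by case: (ge0_ReIm (hpos _ (Rs_D f))).
have e1 : cRe (ip f (Rs f)) = cRe (a (Rs f) (Rs f)) + nrm (Rs f) ^+ 2.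
  by rewrite -{1}(Rs_eq f) (ipDl hip) cReD (a_ip (Rs_DA f) (Rs_D f)) (nrm_sqr hip).
have := CS' hip f (Rs f); rewrite e1 => h.
have h2 : nrm (Rs f) ^+ 2 <= nrm f * nrm (Rs f) by lra.
have [n0|np] := eqVneq (nrm (Rs f)) 0; first by rewrite n0 nrm_ge0.
have pp : 0 < nrm (Rs f) by rewrite lt_def np nrm_ge0.
by rewrite -(ler_pM2r pp) -expr2.
Qed.

Lemma Rs_Resym x y : cRe (ip (Rs x) y) = cRe (ip x (Rs y)).
Proof. by rewrite Rs_sym. Qed.

Lemma form_Rs f : cRe (a (Rs f) (Rs f)) = cRe (ip f (Rs f)) - nrm (Rs f) ^+ 2.
Proof.
by rewrite (a_ip (Rs_DA f) (Rs_D f)) ARs (ipBl hip) cReB (nrm_sqr hip).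
Qed.
End Res.

Section Main.
Variables (R : realType) (HX HY : lmodType R[i]).
Variables (ipX : HX -> HX -> R[i]) (ipY : HY -> HY -> R[i]).
Hypotheses (hipX : is_inner_product ipX) (hipY : is_inner_product ipY).
Local Notation nX := (hnorm ipX).
Local Notation nY := (hnorm ipY).
Hypothesis completeX : forall u : nat -> HX, h_cauchy ipX u -> exists l, h_converges_to ipX u l.
Variables (RX : HX -> HX) (RY : HY -> HY) (aX : HX -> HX -> R[i]) (DX : set HX)
  (Jc : HX -> HY).
Hypotheses (RX_lin : is_linear RX)
  (RX_sym : forall x y, cRe (ipX (RX x) y) = cRe (ipX x (RX y)))
  (RX_bd : forall x, nX (RX x) <= nX x)
  (RX_D : forall f, DX (RX f))
  (RX_form : forall f, cRe (aX (RX f) (RX f)) = cRe (ipX f (RX f)) - nX (RX f) ^+ 2).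
Hypotheses (RY_lin : is_linear RY)
  (RY_sym : forall x y, cRe (ipY (RY x) y) = cRe (ipY x (RY y)))
  (RY_bd : forall x, nY (RY x) <= nY x).
Variables (Mc delta nu d : R).
Hypotheses (Jc_lin : is_linear Jc) (Mc0 : 0 <= Mc) (Jc_bd : forall x, nY (Jc x) <= Mc * nX x)
  (delta0 : 0 <= delta) (nu0 : 0 <= nu) (d0 : 0 < d) (d1 : d < 1)
  (hnud : nu < d / (1 - d))
  (hdel : forall u, nY (Jc (RX u) - RY (Jc u)) <= delta * nX u)
  (h4 : forall u, DX u -> nX u ^+ 2 <= nY (Jc u) ^+ 2 + nu * cRe (aX u u)).

Let k := 1 - nu * (d^-1 - 1).

Lemma k_gt0 : 0 < k.
Proof.
rewrite /k subr_gt0.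
have h1 : 0 < 1 - d by rewrite subr_gt0.
have e : d^-1 - 1 = (1 - d) / d by field; rewrite gt_eqF.
rewrite e mulrA ltr_pdivrMr // mul1r -ltr_pdivlMr //.
Qed.

Lemma main_step lam : real_spectrum ipX RX lam -> d <= lam -> lam <= 1 ->
  forall eta, 0 < eta -> 0 < lam ^+ 2 * k - eta * (2 + nu) ->
  exists mu, real_spectrum ipY RY mu /\
    `|lam - mu| ^+ 2 * (lam ^+ 2 * k - eta * (2 + nu))
      <= (delta * lam + eta * (delta + Mc)) ^+ 2.
Proof.
move=> hsp dl l1 eta eta0 hpos.
have lam0 : 0 < lam by exact: lt_le_trans dl.
have [u [nu1 hu]] := approx_eig hipX RX_lin RX_sym RX_bd completeX hsp eta0.
set u' := RX u.
set e1 := u' - (lam%:C)%C *: u.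
have hu' : u' = (lam%:C)%C *: u + e1 by rewrite /e1 addrC subrK.
set p := cRe (ipX u e1).
have hp : `|p| <= eta.
  apply: (le_trans (CS hipX u e1)); rewrite nu1 mul1r; exact: ltW.
have nu'2 : nX u' ^+ 2 = lam ^+ 2 + 2 * lam * p + nX e1 ^+ 2.
  rewrite hu' (nrm_sqrD hipX) (nrmZ hipX) nu1 mulr1 (Re_ipZl hipX) real_normK ?num_real //.
  by rewrite mulrA.
have ipuu' : cRe (ipX u u') = lam + p.
  rewrite hu' (ipDr hipX) cReD (Re_ipZr hipX) -(nrm_sqr hipX) nu1 expr1n mulr1 //.
have hform := RX_form u.
rewrite -/u' ipuu' nu'2 in hform.
have hW := h4 (RX_D u); rewrite -/u' hform nu'2 in hW.
set W := nY (Jc u') ^+ 2 in hW.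
have E0 : 0 <= nX e1 ^+ 2 by rewrite sqr_ge0.
have hp1 : - eta <= p by move: hp; rewrite ler_norml => /andP[].
have hp2 : p <= eta by move: hp; rewrite ler_norml => /andP[].
have di : 1 <= lam * d^-1 by rewrite ler_pdivlMr // mul1r.
have hk : lam ^+ 2 * k <= lam ^+ 2 - nu * (lam - lam ^+ 2).
  rewrite /k.
  have : nu * (lam - lam ^+ 2) <= nu * (lam ^+ 2 * (d^-1 - 1)).
    apply: ler_wpM2l => //.
    have -> : lam ^+ 2 * (d^-1 - 1) = lam * (lam * d^-1) - lam ^+ 2 by rewrite expr2; ring.
    rewrite lerD2r.
    by rewrite -{1}(mulr1 lam) ler_wpM2l // ltW.
  move=> h; rewrite mulrBr mulr1; lra.
have herr1 : - eta * 2 <= 2 * lam * p.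
  have : lam * (- eta) <= lam * p by rewrite ler_wpM2l // ltW.
  have : 1 * eta >= lam * eta by rewrite ler_wpM2r // ltW.
  move=> h1 h2; nra.
have herr2 : - (eta * nu) <= nu * (2 * lam * p - p).
  have : `|2 * lam - 1| <= 1 by rewrite ler_norml; apply/andP; split; lra.
  move=> h2.
  have h3 : `|(2 * lam - 1) * p| <= eta.
    rewrite normrM; apply: (le_trans (ler_wpM2r (normr_ge0 _) h2)); by rewrite mul1r.
  have h5 : - eta <= (2 * lam - 1) * p by move: h3; rewrite ler_norml => /andP[].
  have : nu * (- eta) <= nu * ((2 * lam - 1) * p) by rewrite ler_wpM2l.
  move=> h6; have -> : nu * (2 * lam * p - p) = nu * ((2 * lam - 1) * p) by ring.
  lra.
have hW' : lam ^+ 2 * k - eta * (2 + nu) <= W.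
  have h7 : nu * (lam + p - (lam ^+ 2 + 2 * lam * p + nX e1 ^+ 2))
     = nu * (lam - lam ^+ 2) - nu * (2 * lam * p - p) - nu * nX e1 ^+ 2 by ring.
  rewrite h7 in hW.
  have h8 : 0 <= nu * nX e1 ^+ 2 by rewrite mulr_ge0.
  lra.
have Wpos : 0 < W by exact: lt_le_trans hW'.
have w0 : Jc u' <> 0.
  move=> hw; move: Wpos; rewrite /W hw (nrm0 hipY) expr0n /= ltxx.
  done.
have nw := nrm_gt0 hipY w0.
have hRXe : RX u' - (lam%:C)%C *: u' = RX e1.
  by rewrite /e1 (linB RX_lin) (linZ RX_lin).
have hnu' : nX u' <= lam + eta.
  rewrite hu'; apply: (le_trans (nrm_triangle hipX _ _)).
  rewrite (nrmZ hipX) nu1 mulr1 ger0_norm ?(ltW lam0) // lerD2l; exact: ltW.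
have hest : nY (RY (Jc u') - (lam%:C)%C *: Jc u') <= delta * lam + eta * (delta + Mc).
  have -> : RY (Jc u') - (lam%:C)%C *: Jc u'
      = Jc (RX u' - (lam%:C)%C *: u') - (Jc (RX u') - RY (Jc u')).
    by rewrite (linB Jc_lin) (linZ Jc_lin) opprB [RHS]addrC addrA subrK.
  apply: (le_trans (nrm_triangleB hipY _ _)).
  have a1 := hdel u'.
  have a2 : nY (Jc (RX u' - (lam%:C)%C *: u')) <= Mc * eta.
    rewrite hRXe; apply: (le_trans (Jc_bd _)); apply: ler_wpM2l => //.
    exact: le_trans (RX_bd _) (ltW hu).
  have a3 : delta * nX u' <= delta * (lam + eta) by rewrite ler_wpM2l.
  lra.
have hsn : nY (RY (Jc u') - (lam%:C)%C *: Jc u')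
    <= ((delta * lam + eta * (delta + Mc)) / nY (Jc u')) * nY (Jc u').
  by rewrite divfK ?gt_eqF.
have [mu [hmu hmul]] := spec_near hipY RY_lin RY_sym RY_bd w0 hsn.
exists mu; split => //.
have hm0 : 0 <= `|lam - mu| by [].
have : `|lam - mu| * nY (Jc u') <= delta * lam + eta * (delta + Mc).
  by rewrite -ler_pdivlMr.
move=> h.
apply: (le_trans (ler_wpM2l (sqr_ge0 _) hW')).
rewrite /W -exprMn ler_sqr ?nnegrE ?mulr_ge0 ?nrm_ge0 //.
have := ltW lam0; have := ltW eta0; move=> ? ?.
by rewrite addr_ge0 ?mulr_ge0 ?addr_ge0.
Qed.

Lemma le0_small (z K e0 : R) : 0 < e0 ->
  (forall eta, 0 < eta -> eta <= e0 -> z <= eta * K) -> z <= 0.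
Proof.
move=> e00 h; rewrite leNgt; apply/negP => z0.
have hK := h e0 e00 (lexx _).
have K0 : 0 < K by rewrite -(pmulr_rgt0 _ e00); exact: lt_le_trans hK.
pose eta := Order.min e0 (z / (2 * K)).
have eta0 : 0 < eta by rewrite /eta lt_min e00 divr_gt0 // mulr_gt0.
have eta1 : eta <= z / (2 * K) by rewrite /eta ge_min lexx orbT.
have eta2 : eta <= e0 by rewrite /eta ge_min lexx.
have := h eta eta0 eta2.
have : eta * K <= z / (2 * K) * K by rewrite ler_wpM2r // ltW.
have -> : z / (2 * K) * K = z / 2 by field; rewrite gt_eqF.
lra.
Qed.

Lemma inf_bound lam : real_spectrum ipX RX lam -> d <= lam -> lam <= 1 ->
  (ereal_inf [set (`|lam - y|)%:E | y in real_spectrum ipY RY]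
     <= (delta / Num.sqrt k)%:E)%E.
Proof.
move=> hsp dl l1.
set S := [set _ | _ in _].
have lam0 : 0 < lam by exact: lt_le_trans dl.
pose C1 := 2 + nu.
pose C2 := delta + Mc.
pose a0 := lam ^+ 2 * k.
have a00 : 0 < a0 by rewrite mulr_gt0 ?exprn_gt0 ?k_gt0.
have C10 : 0 < C1 by rewrite /C1 ltr_pwDl.
pose e0 := Order.min 1 (a0 / (2 * C1)).
have e00 : 0 < e0 by rewrite /e0 lt_min ltr01 divr_gt0 // mulr_gt0.
have small eta : 0 < eta -> eta <= e0 -> 0 < a0 - eta * C1.
  move=> h1 h2.
  have h3 : eta <= a0 / (2 * C1) by apply: (le_trans h2); rewrite /e0 ge_min lexx orbT.
  have : eta * C1 <= a0 / (2 * C1) * C1 by rewrite ler_wpM2r // ltW.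
  have -> : a0 / (2 * C1) * C1 = a0 / 2 by field; rewrite gt_eqF.
  lra.
have [mu0 [hmu0 _]] := main_step hsp dl l1 e00 (small _ e00 (lexx _)).
have ub : (ereal_inf S <= (`|lam - mu0|)%:E)%E.
  by apply: ge_ereal_inf; exists (`|lam - mu0|)%:E => //; exists mu0.
have lb : (0 <= ereal_inf S)%E.
  by apply: le_ereal_inf_tmp => _ [y _ <-]; rewrite lee_fin.
case E: (ereal_inf S) ub lb => [r| |] //= ub lb.
rewrite lee_fin in lb *.
have hr eta : 0 < eta -> eta <= e0 ->
    r ^+ 2 * (a0 - eta * C1) <= (delta * lam + eta * C2) ^+ 2.
  move=> h1 h2.
  have [mu [hmu hm]] := main_step hsp dl l1 h1 (small _ h1 h2).
  have : (ereal_inf S <= (`|lam - mu|)%:E)%E.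
    by apply: ge_ereal_inf; exists (`|lam - mu|)%:E => //; exists mu.
  rewrite E lee_fin => hrm.
  apply: le_trans hm; apply: ler_wpM2r; first exact: ltW (small _ h1 h2).
  by rewrite ler_sqr ?nnegrE.
have z0 : r ^+ 2 * a0 - delta ^+ 2 * lam ^+ 2 <= 0.
  apply: (le0_small (K := r ^+ 2 * C1 + 2 * delta * lam * C2 + C2 ^+ 2) e00).
  move=> eta h1 h2.
  have h := hr eta h1 h2.
  have he1 : eta <= 1 by apply: (le_trans h2); rewrite /e0 ge_min lexx.
  have h5 : eta * eta * C2 ^+ 2 <= eta * C2 ^+ 2.
    by rewrite -mulrA ler_piMl // mulr_ge0 ?sqr_ge0 // ltW.
  move: h; rewrite sqrrD !exprMn; move: h5; nra.
have lam2 : 0 < lam ^+ 2 by rewrite exprn_gt0.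
have k0 := k_gt0.
have h6 : r ^+ 2 * k <= delta ^+ 2.
  rewrite -(ler_pM2r lam2); move: z0; rewrite /a0; lra.
have sk : 0 < Num.sqrt k by rewrite sqrtr_gt0.
have h7 : r ^+ 2 <= (delta / Num.sqrt k) ^+ 2.
  by rewrite exprMn exprVn sqr_sqrtr ?(ltW k0) // ler_pdivlMr.
move: h7; rewrite ler_sqr ?nnegrE ?divr_ge0 ?sqrtr_ge0 //.
Qed.

Lemma dist_bound :
  (dist_out (real_spectrum ipX RX `&` [set x : R | (d <= x <= 1)%R])
            (real_spectrum ipY RY) <= (delta / Num.sqrt k)%:E)%E.
Proof.
rewrite /dist_out ge_max; apply/andP; split.
  by rewrite lee_fin divr_ge0 ?sqrtr_ge0.
apply: ge_ereal_sup => _ [x [hx /andP[dx x1]] <-].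
exact: inf_bound.
Qed.
End Main.

Section Opn.
Variables (R : realType) (HX HY : lmodType R[i]).
Variables (ipX : HX -> HX -> R[i]) (ipY : HY -> HY -> R[i]).
Hypotheses (hipX : is_inner_product ipX) (hipY : is_inner_product ipY).
Local Notation nX := (hnorm ipX).
Local Notation nY := (hnorm ipY).

Lemma opnorm_le (T : HX -> HY) (M : R) : is_linear T ->
  (forall x, nY (T x) <= M * nX x) ->
  forall x, nY (T x) <= opnorm ipX ipY T * nX x.
Proof.
move=> hT hM x.
have [->|xn0] := eqVneq x 0.
  by rewrite (lin0 hT) !(nrm0 _) ?mulr0.
have xne : x <> 0 by apply/eqP.
have n0 := nrm_gt0 hipX xne.
set u := ((nX x)^-1)%:C%C *: x.
have hu : nX u = 1 by exact: nrm_normalize.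
have hsup : has_sup [set nY (T y) | y in [set y | nX y <= 1]].
  split; first by exists (nY (T u)); exists u => //; rewrite /= hu.
  exists `|M| => _ [y hy <-].
  apply: (le_trans (hM y)); apply: (le_trans (ler_wpM2r (nrm_ge0 ipX y) (ler_norm M))).
  by rewrite -{2}(mulr1 `|M|) ler_wpM2l.
have hu1 : [set y | nX y <= 1] u by rewrite /= hu.
have := sup_upper_bound hsup (ex_intro2 _ _ u hu1 erefl).
rewrite /u (linZ hT) (nrmZ hipY) ger0_norm ?invr_ge0 ?(ltW n0) // => h.
by rewrite mulrC -ler_pdivrMl.
Qed.
End Opn.

Lemma lin_comp_diff (R : realType) (H K : lmodType R[i]) (F1 F2 : H -> K) :
  is_linear F1 -> is_linear F2 -> is_linear (fun x => F1 x - F2 x).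
Proof.
move=> h1 h2 a x y; rewrite h1 h2 scalerBr opprD addrACA.
by congr (_ + _).
Qed.

Lemma lin_comp (R : realType) (H K L : lmodType R[i]) (F : K -> L) (G : H -> K) :
  is_linear F -> is_linear G -> is_linear (fun x => F (G x)).
Proof. by move=> h1 h2 a x y; rewrite h2 h1. Qed.

Unset Implicit Arguments.
Theorem theorem5 (R : realType)
  (H : lmodType R[i]) (ipH : H -> H -> R[i]) (hH : is_separable_hilbert ipH)
  (D : set H) (a : H -> H -> R[i]) (ha : closed_dd_nonneg_form ipH D a)
  (DA : set H) (A : H -> H) (hA : associated_operator ipH D a DA A)
  (Rs : H -> H) (hRs : is_resolvent DA A Rs)
  (He : lmodType R[i]) (ipHe : He -> He -> R[i]) (hHe : is_separable_hilbert ipHe)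
  (De : set He) (ae : He -> He -> R[i]) (hae : closed_dd_nonneg_form ipHe De ae)
  (DAe : set He) (Ae : He -> He) (hAe : associated_operator ipHe De ae DAe Ae)
  (Rse : He -> He) (hRse : is_resolvent DAe Ae Rse)
  (J : H -> He) (Jc : He -> H)
  (hJ : bounded_linear ipH ipHe J) (hJc : bounded_linear ipHe ipH Jc)
  (delta deltac nu nuc : R)
  (hdelta : 0 <= delta) (hdeltac : 0 <= deltac) (hnu : 0 <= nu) (hnuc : 0 <= nuc)
  (h1 : opnorm ipH ipHe (fun f => Rse (J f) - J (Rs f)) <= delta)
  (h2 : opnorm ipHe ipH (fun u => Jc (Rse u) - Rs (Jc u)) <= deltac)
  (h3 : forall f, D f ->
      hnorm ipH f ^+ 2 <= hnorm ipHe (J f) ^+ 2 + nu * complex.Re (a f f))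
  (h4 : forall u, De u ->
      hnorm ipHe u ^+ 2 <= hnorm ipH (Jc u) ^+ 2 + nuc * complex.Re (ae u u))
  (d : R) (hd : 0 < d < 1)
  (hnud : nu < d / (1 - d)) (hnucd : nuc < d / (1 - d)) :
  (dist_out (real_spectrum ipHe Rse `&` [set x : R | (d <= x <= 1)%R])
            (real_spectrum ipH Rs)
     <= (deltac / Num.sqrt (1 - nuc * (d^-1 - 1)))%:E)%E /\
  (dist_out (real_spectrum ipH Rs `&` [set x : R | (d <= x <= 1)%R])
            (real_spectrum ipHe Rse)
     <= (delta / Num.sqrt (1 - nu * (d^-1 - 1)))%:E)%E.
Proof.
case: hH => hipH complH _; case: hHe => hipHe complHe _.
case: hJ => Jlin [MJ hMJ]; case: hJc => Jclin [MJc hMJc].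
case/andP: hd => d0 d1.
have hMJ' x : hnorm ipHe (J x) <= `|MJ| * hnorm ipH x.
  exact: le_trans (hMJ x) (ler_wpM2r (nrm_ge0 _ _) (ler_norm MJ)).
have hMJc' x : hnorm ipH (Jc x) <= `|MJc| * hnorm ipHe x.
  exact: le_trans (hMJc x) (ler_wpM2r (nrm_ge0 _ _) (ler_norm MJc)).
have Rs_l := Rs_lin hipH ha hA hRs.
have Rse_l := Rs_lin hipHe hae hAe hRse.
have Rs_s := Rs_Resym hipH ha hA hRs.
have Rse_s := Rs_Resym hipHe hae hAe hRse.
have Rs_b := Rs_bd hipH ha hA hRs.
have Rse_b := Rs_bd hipHe hae hAe hRse.
have Rs_d := Rs_D hA hRs.
have Rse_d := Rs_D hAe hRse.
have Rs_f := form_Rs hipH hA hRs.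
have Rse_f := form_Rs hipHe hAe hRse.
split.
- have T_lin : is_linear (fun u => Jc (Rse u) - Rs (Jc u)).
    by apply: lin_comp_diff; apply: lin_comp.
  have T_bd x : hnorm ipH (Jc (Rse x) - Rs (Jc x)) <= (`|MJc| + `|MJc|) * hnorm ipHe x.
    apply: (le_trans (nrm_triangleB hipH _ _)); rewrite mulrDl.
    apply: lerD.
      by apply: (le_trans (hMJc' _)); apply: ler_wpM2l => //; exact: Rse_b.
    by apply: (le_trans (Rs_b _)); exact: hMJc'.
  have hdel u : hnorm ipH (Jc (Rse u) - Rs (Jc u)) <= deltac * hnorm ipHe u.
    apply: (le_trans (opnorm_le hipHe hipH T_lin T_bd u)).
    by apply: ler_wpM2r => //; exact: nrm_ge0.
  exact: (dist_bound hipHe hipH complHe Rse_l Rse_s Rse_b Rse_d Rse_f Rs_l Rs_s Rs_b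
     Jclin (normr_ge0 MJc) hMJc' hdeltac hnuc d0 d1 hnucd hdel h4).
- have T_lin : is_linear (fun f => Rse (J f) - J (Rs f)).
    by apply: lin_comp_diff; apply: lin_comp.
  have T_bd x : hnorm ipHe (Rse (J x) - J (Rs x)) <= (`|MJ| + `|MJ|) * hnorm ipH x.
    apply: (le_trans (nrm_triangleB hipHe _ _)); rewrite mulrDl.
    apply: lerD.
      by apply: (le_trans (Rse_b _)); exact: hMJ'.
    by apply: (le_trans (hMJ' _)); apply: ler_wpM2l => //; exact: Rs_b.
  have hdel u : hnorm ipHe (J (Rs u) - Rse (J u)) <= delta * hnorm ipH u.
    rewrite (nrmB hipHe).
    apply: (le_trans (opnorm_le hipH hipHe T_lin T_bd u)).
    by apply: ler_wpM2r => //; exact: nrm_ge0.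
  exact: (dist_bound hipH hipHe complH Rs_l Rs_s Rs_b Rs_d Rs_f Rse_l Rse_s Rse_b
     Jlin (normr_ge0 MJ) hMJ' hdelta hnu d0 d1 hnud hdel h3).
Qed.
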